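(* Let $(\Omega,\Sigma,\Pr)$ be a probability space and let $A_i\in\Sigma$ for $i\in\mathbb{N}$. For $k\in\mathbb{N}$ let $S_k:=\sum_{1\le i_1<\cdots<i_k}\Pr(A_{i_1}\cap\cdots\cap A_{i_k})$, and assume $S_l\in[0,\infty)$ for all $l\in\mathbb{N}$. Suppose that for some integer $m>1$ the identity $$\Pr\Big(\bigcup_{1\le i_1<\cdots<i_k}(A_{i_1}\cap\cdots\cap A_{i_k})\Big)=\sum_{j\in\mathbb{Z}_+}(-1)^j\binom{j+k-1}{k-1}S_{j+k}$$ holds for $k=m$ (with the series convergent). Then this identity holds for each $k=1,\ldots,m-1$.
   Context: $\mathbb{N}$ denotes the positive integers and $\mathbb{Z}_+$ the nonnegative integers. *)

(* Defs.v *)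
From HB Require Import structures.
From mathcomp Require Import all_boot all_order all_algebra finmap.
From mathcomp Require Import all_classical all_reals all_analysis.
Set Implicit Arguments. Unset Strict Implicit. Unset Printing Implicit Defensive.
Import Order.TTheory GRing.Theory Num.Theory numFieldNormedType.Exports.
Local Open Scope classical_set_scope.
Local Open Scope ring_scope.

(* Index sets {i_1 < ... < i_k} of positive integers, as finite sets of nat
   of cardinality k, all of whose elements are >= 1. *)
Definition ksubsets (k : nat) : set {fset nat} :=
  [set I : {fset nat} | #|` I| = k /\ (forall i, i \in I -> (0 < i)%N)].

Definition inter_of {T : Type} (A : nat -> set T) (I : {fset nat}) : set T :=
  \bigcap_(i in [set i | i \in I]) A i.

Definition Ssum d (T : measurableType d) (R : realType) (P : probability T R)
  (A : nat -> set T) (k : nat) : \bar R :=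
  (\esum_(I in ksubsets k) P (inter_of A I))%E.

Definition atleast {T : Type} (A : nat -> set T) (k : nat) : set T :=
  \bigcup_(I in ksubsets k) inter_of A I.

Definition identity_holds d (T : measurableType d) (R : realType)
  (P : probability T R) (A : nat -> set T) (k : nat) : Prop :=
  series (fun j : nat => (-1) ^+ j * ('C(j + k - 1, k - 1))%:R
                          * fine (Ssum P A (j + k)))
    @ \oo --> fine (P (atleast A k)).

(* Main.v *)
Require Import Defs.
From HB Require Import structures.
From mathcomp Require Import all_boot all_order all_algebra finmap.
From mathcomp Require Import all_classical all_reals all_analysis.
From mathcomp Require Import ring lra zify.
Set Implicit Arguments. Unset Strict Implicit. Unset Printing Implicit Defensive.
Import Order.TTheory GRing.Theory Num.Theory numFieldNormedType.Exports.
Local Open Scope classical_set_scope.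
Local Open Scope ring_scope.

Lemma bin_subsub (j a n : nat) :
  ('C(j + a, a) * 'C(n, j + a) = 'C(n, a) * 'C(n - a, j))%N.
Proof.
have [lt|le] := ltnP n (j + a).
  rewrite (bin_small lt) muln0.
  have [lt2|le2] := ltnP n a; first by rewrite bin_small.
  by rewrite (@bin_small (n - a)) ?muln0 //; lia.
have X0 : (0 < a`! * j`! * (n - a - j)`!)%N by rewrite !muln_gt0 !fact_gt0.
apply/eqP; rewrite -(eqn_pmul2r X0); apply/eqP.
have h1 := bin_fact (leq_addl j a). rewrite addnK in h1.
have h2 := bin_fact le.
have h3 := bin_fact (leq_trans (leq_addl j a) le).
have h4 : (j <= n - a)%N by lia.
have h4' := bin_fact h4.
have e : (n - (j + a) = n - a - j)%N by lia.
rewrite e in h2.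
transitivity ('C(n, j + a) * (('C(j + a, a) * (a`! * j`!)) * (n - a - j)`!))%N.
  ring.
rewrite h1 h2 -h3 -h4'. ring.
Qed.

Section Comb.
Variable R : realType.

Lemma alt_bin (a J : nat) : (0 < a)%N ->
  \sum_(j < J.+1) (-1) ^+ j * ('C(a, j))%:R = (-1) ^+ J * ('C(a.-1, J))%:R :> R.
Proof.
case: a => // a _ /=.
elim: J => [|J IH]; first by rewrite big_ord1 !bin0.
rewrite big_ord_recr /= IH binS natrD exprS; ring.
Qed.

Definition rr (k J n : nat) : nat :=
  (\sum_(t < n | (k <= t)%N) 'C(t, k.-1) * 'C(t - k, J))%N.

Lemma rrS (k J n : nat) :
  rr k J n.+1 = (rr k J n + (k <= n) * ('C(n, k.-1) * 'C(n - k, J)))%N.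
Proof.
rewrite /rr big_mkcond big_ord_recr /= -big_mkcond /=.
by case: (k <= n)%N; rewrite ?mul1n ?mul0n.
Qed.

Lemma main_id (k J n : nat) : (0 < k)%N ->
  \sum_(j < J.+1) (-1) ^+ j * ('C(j + k - 1, k - 1))%:R * ('C(n, j + k))%:R
  = ((k <= n)%N)%:R + (-1) ^+ J * (rr k J n)%:R :> R.
Proof.
case: k => // a _.
have E1 : forall j, (j + a.+1 - 1 = j + a)%N by move=> j; lia.
have E2 : (a.+1 - 1 = a)%N by lia.
elim: n => [|n IH].
  rewrite /rr big_ord0 mulr0 addr0 /=.
  by apply: big1 => j _; rewrite bin0n addnS /= mulr0.
have -> : \sum_(j < J.+1) (-1) ^+ j * ('C(j + a.+1 - 1, a.+1 - 1))%:R * ('C(n.+1, j + a.+1))%:R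
  = \sum_(j < J.+1) (-1) ^+ j * ('C(j + a.+1 - 1, a.+1 - 1))%:R * ('C(n, j + a.+1))%:R
    + ('C(n, a))%:R * \sum_(j < J.+1) (-1) ^+ j * ('C(n - a, j))%:R :> R.
  rewrite mulr_sumr -big_split /=; apply: eq_bigr => j _.
  rewrite E1 E2 addnS binS natrD mulrDr; congr (_ + _).
  rewrite mulrCA -mulrA -natrM bin_subsub natrM; ring.
rewrite IH rrS.
have [lt|gt|eq] := ltngtP n a.
- rewrite (bin_small lt) mul0r /= addn0 addr0.
  by rewrite ltnS leqNgt lt.
- rewrite ltnS ltnW // alt_bin ?subn_gt0 //.
  have -> : (n - a.+1 = (n - a).-1)%N by lia.
  rewrite mul1n natrD natrM /=; ring.
- subst n; rewrite big_ord_recl big1 ?bin0 /=; last first.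
    by move=> i _; rewrite subnn bin0n /= mulr0.
  by rewrite ltnSn binn /= addn0 mulr1 addr0 add0r mulr1 addrC.
Qed.

Lemma rr_step (k J n : nat) : (0 < k)%N -> (k <= J.+1)%N ->
  (rr k J.+1 n <= rr k.+1 J n)%N.
Proof.
move=> k0 kJ; rewrite /rr big_mkcond [X in (_ <= X)%N]big_mkcond /=.
apply: leq_sum => t _.
case: (ltngtP k t) => [lt|gt|eq]; last first.
- by rewrite -eq subnn bin0n muln0.
- by [].
case: k k0 kJ lt => // a _ aJ lt /=.
set s := (t - a.+1)%N.
have s0 : (0 < s)%N by rewrite /s subn_gt0.
have Hd := mul_bin_diag s J.
have Hl := mul_bin_left t a.
have ts : (t - a = s.+1)%N by rewrite /s; lia.
have -> : (t - a.+2 = s.-1)%N by rewrite /s; lia.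
rewrite -(@leq_pmul2r (a.+1 * s)) ?muln_gt0 //.
have E : ('C(t, a.+1) * 'C(s.-1, J) * (a.+1 * s))%N
    = ('C(t, a) * 'C(s, J.+1) * (J.+1 * (t - a)))%N.
  transitivity ((a.+1 * 'C(t, a.+1)) * (s * 'C(s.-1, J)))%N; first ring.
  rewrite Hl Hd; ring.
rewrite E leq_mul2l; apply/orP; right; rewrite ts leq_mul //.
Qed.
Lemma ring_aux (x y z : R) J :
  (-1) ^+ J.+1 * (x * y - x * (y + (-1) ^+ J * z)) = x * z.
Proof.
rewrite exprS; transitivity (x * z * ((-1) ^+ J * (-1) ^+ J)); first ring.
by rewrite -expr2 -exprM mulnC exprM sqrrN !expr1n mulr1.
Qed.
End Comb.

Definition emb (M : nat) (tau : {set 'I_M}) : {fset nat} :=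
  [fset x in [seq (nat_of_ord i).+1 | i <- enum tau]]%fset.

Lemma emb_mem M tau x : (x \in emb tau) = [exists i : 'I_M, (i \in tau) && (x == i.+1)].
Proof.
rewrite /emb inE /=; apply/mapP/existsP => [[i]|[i /andP[it /eqP ->]]].
  by rewrite mem_enum => it ->; exists i; rewrite it eqxx.
by exists i; rewrite ?mem_enum.
Qed.

Lemma emb_memS M tau (i : 'I_M) : (i.+1 \in emb tau) = (i \in tau).
Proof.
rewrite emb_mem; apply/existsP/idP => [[j /andP[jt /eqP e]]|it].
  by have -> : i = j by apply: val_inj; case: e.
by exists i; rewrite it eqxx.
Qed.

Lemma emb_card M tau : #|` @emb M tau| = #|tau|.
Proof.
rewrite /emb card_fseq undup_id ?size_map -?cardE //.
by rewrite map_inj_uniq ?enum_uniq // => i j [] /val_inj.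
Qed.

Lemma emb_inj M : injective (@emb M).
Proof.
move=> s t est; apply/setP => i; by rewrite -!emb_memS est.
Qed.

Lemma emb_pos M tau x : x \in @emb M tau -> (0 < x)%N.
Proof. by rewrite emb_mem => /existsP[i /andP[_ /eqP ->]]. Qed.

Lemma emb_bound M tau x : x \in @emb M tau -> (x <= M)%N.
Proof. by rewrite emb_mem => /existsP[i /andP[_ /eqP ->]]. Qed.

Lemma emb_surj M (I : {fset nat}) : (forall x, x \in I -> (0 < x <= M)%N) ->
  emb [set i : 'I_M | i.+1 \in I] = I.
Proof.
move=> HI; apply/fsetP => x; rewrite emb_mem.
apply/existsP/idP => [[i /andP[]]|xI].
  by rewrite inE => iI /eqP ->.
have /andP[x0 xM] := HI x xI.
have lt : (x.-1 < M)%N by lia.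
exists (Ordinal lt); rewrite inE /=.
by rewrite prednK // xI eqxx.
Qed.

Section Meas.
Variables (d : measure_display) (T : measurableType d) (R : realType).
Variable (P : probability T R).
Local Open Scope ereal_scope.

Lemma fsum_finType (I : finType) (p : pred I) (f : I -> \bar R) :
  \sum_(i \in [set i | p i]) f i = \sum_(i | p i) f i.
Proof.
rewrite fsbig_mkcond (fsbigE (enum I)) ?enum_uniq //; last first.
  by move=> i _; rewrite mem_enum.
rewrite big_enum_cond /= [RHS]big_mkcond /=; apply: eq_big => [i|i _]; first by rewrite in_setT.
rewrite /patch; have [pi|npi] := boolP (p i); first by rewrite mem_set. by rewrite memNset //; apply/negP.
Qed.

Lemma atoms_sum (I : finType) (g : T -> I)
  (mg : forall i, measurable (g @^-1` [set i])) (p : pred I) :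
  P [set w | p (g w)] = \sum_(i | p i) P (g @^-1` [set i]).
Proof.
have -> : [set w | p (g w)] = \bigcup_(i in [set i | p i]) (g @^-1` [set i]).
  apply/seteqP; split => w /=; first by move=> pw; exists (g w).
  by move=> [i pi gi]; rewrite /= -gi in pi.
rewrite measure_fin_bigcup //; first by rewrite fsum_finType.
all: try exact: finite_finset.
all: try by move=> i j _ _ [w [/= <- <-]].
Qed.

Local Close Scope ereal_scope.
Variables (A : nat -> set T) (mA : forall i, measurable (A i)).

Definition FM (M : nat) (w : T) : {set 'I_M} := [set i : 'I_M | `[< A i.+1 w >]].

Lemma mFM M (s : {set 'I_M}) : measurable (FM M @^-1` [set s]).
Proof.
have -> : FM M @^-1` [set s] =
    \bigcap_(i in [set: 'I_M]) (if i \in s then A i.+1 else ~` A i.+1).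
  apply/seteqP; split => w /=.
    move=> <- i _; rewrite /FM inE; case: asboolP => //.
  move=> H; apply/setP => i; rewrite /FM inE.
  have := H i I; case: (i \in s) => Hi; first exact/asboolT.
  exact/asboolF.
apply: fin_bigcap_measurable; first exact: finite_finset.
move=> i _; case: (i \in s) => //; exact: measurableC.
Qed.

Lemma finP (X : set T) : measurable X -> P X \is a fin_num.
Proof. by move=> mX; rewrite fin_num_measure. Qed.

Definition q M (s : {set 'I_M}) : R := fine (P (FM M @^-1` [set s])).
Arguments q : clear implicits.

Lemma q_ge0 M s : (0 <= q M s)%R.
Proof. by rewrite /q fine_ge0 // measure_ge0. Qed.

Lemma Pdet M (p : pred {set 'I_M}) :
  P [set w | p (FM M w)] = (\sum_(s | p s) q M s)%:E.
Proof.
rewrite atoms_sum; last exact: mFM.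
rewrite -sumEFin; apply: eq_bigr => s _.
by rewrite /q fineK //; apply: finP; exact: mFM.
Qed.

Lemma inter_emb M (t : {set 'I_M}) :
  inter_of A (emb t) = [set w | t \subset FM M w].
Proof.
apply/seteqP; split => w /=.
  move=> H; apply/fintype.subsetP => i it; rewrite /FM inE; apply/asboolP.
  by apply: H; rewrite /= emb_memS.
move=> /fintype.subsetP sub x /=; rewrite emb_mem => /existsP[i /andP[it /eqP ->]].
by have := sub i it; rewrite /FM inE => /asboolP.
Qed.

Definition SM M l : R :=
  \sum_(t : {set 'I_M} | #|t| == l) fine (P (inter_of A (emb t))).

Lemma SM_E M l : SM M l = \sum_(s : {set 'I_M}) q M s * ('C(#|s|, l))%:R.
Proof.
have E (t : {set 'I_M}) : fine (P (inter_of A (emb t))) = \sum_(s : {set 'I_M} | t \subset s) q M s.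
  by rewrite inter_emb (Pdet (fun s : {set 'I_M} => t \subset s)).
rewrite /SM (eq_bigr _ (fun t _ => E t)).
rewrite (exchange_big_dep predT) //=; apply: eq_bigr => s _.
rewrite sumr_const -cards_draws mulr_natr; congr (_ *+ _).
by apply: eq_card => t; rewrite !inE andbC.
Qed.

Definition TM M k : R := fine (P [set w | (k <= #|FM M w|)%N]).

Lemma TM_E M k : TM M k = \sum_(s : {set 'I_M} | (k <= #|s|)%N) q M s.
Proof. by rewrite /TM (Pdet (fun s : {set 'I_M} => (k <= #|s|)%N)). Qed.

Definition uM M k J : R :=
  \sum_(j < J.+1) (-1) ^+ j * ('C(j + k - 1, k - 1))%:R * SM M (j + k)%N.

Definition errM M k J : R := (-1) ^+ J.+1 * (TM M k - uM M k J).

Lemma errM_E M k J : (0 < k)%N ->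
  errM M k J = \sum_(s : {set 'I_M}) q M s * (rr k J #|s|)%:R.
Proof.
move=> k0.
have H1 : uM M k J = \sum_(s : {set 'I_M}) q M s *
    (((k <= #|s|)%N)%:R + (-1) ^+ J * (rr k J #|s|)%:R).
  rewrite /uM; under eq_bigr do rewrite SM_E mulr_sumr.
  rewrite exchange_big /=; apply: eq_bigr => s _.
  rewrite -(main_id R J #|s| k0) mulr_sumr; apply: eq_bigr => j _; by rewrite mulrCA.
have H2 : \sum_(s : {set 'I_M} | (k <= #|s|)%N) q M s =
    \sum_(s : {set 'I_M}) q M s * ((k <= #|s|)%N)%:R.
  by rewrite big_mkcond; apply: eq_bigr => s _; case: (k <= #|s|)%N; rewrite ?mulr1 ?mulr0.
rewrite /errM TM_E H1 H2 -sumrB mulr_sumr; apply: eq_bigr => s _.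
exact: ring_aux.
Qed.

Lemma errM_ge0 M k J : (0 < k)%N -> (0 <= errM M k J)%R.
Proof.
move=> k0; rewrite errM_E //; apply: sumr_ge0 => s _.
by rewrite mulr_ge0 ?q_ge0 ?ler0n.
Qed.

Lemma errM_step M k J : (0 < k)%N -> (k <= J.+1)%N ->
  (errM M k J.+1 <= errM M k.+1 J)%R.
Proof.
move=> k0 kJ; rewrite !errM_E //; apply: ler_sum => s _.
by rewrite ler_wpM2l ?q_ge0 // ler_nat rr_step.
Qed.

Lemma mdet M (p : pred {set 'I_M}) : measurable [set w | p (FM M w)].
Proof.
have -> : [set w | p (FM M w)] = \bigcup_(s in [set s | p s]) (FM M @^-1` [set s]).
  apply/seteqP; split => w /=; first by move=> pw; exists (FM M w).
  by move=> [s ps sw]; rewrite /= -sw in ps.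
apply: fin_bigcup_measurable; first exact: finite_finset.
move=> s _; exact: mFM.
Qed.

Lemma cnt_E M w : #|FM M w| = (\sum_(i < M) `[< A i.+1 w >])%N.
Proof.
rewrite -sum1_card big_mkcond /=; apply: eq_bigr => i _.
by rewrite /FM inE; case: asboolP.
Qed.

Lemma cnt_mono w : {homo (fun M => #|FM M w|) : M N / (M <= N)%N >-> (M <= N)%N}.
Proof.
apply: homo_leq => [//|M N L|M]; first exact: leq_trans.
by rewrite !cnt_E big_ord_recr /= leq_addr.
Qed.

Definition G k M := [set w | (k <= #|FM M w|)%N].

Lemma G_union k : (0 < k)%N -> \bigcup_M G k M = atleast A k.
Proof.
move=> k0; apply/seteqP; split => w /=.
  move=> [M _ /= kM].
  have : (0 < #|[set t : {set 'I_M} | t \subset FM M w & #|t| == k]|)%N.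
    by rewrite cards_draws bin_gt0.
  move=> /card_gt0P [t]; rewrite inE => /andP[tF /eqP tk].
  exists (emb t).
    split; first by rewrite emb_card.
    by move=> i /emb_pos.
  by rewrite inter_emb.
move=> [I [Ik Ipos] wI].
pose M := (\max_(x <- I) x)%N.
have HI : forall x, x \in I -> (0 < x <= M)%N.
  by move=> x xI; rewrite Ipos //=; exact: (@leq_bigmax_seq nat (enum_fset I) xpredT id x xI isT).
exists M => //=.
rewrite -Ik -(emb_surj HI) emb_card.
apply: subset_leq_card; apply/fintype.subsetP => i.
rewrite !inE => iI; exact: (wI i.+1 iI).
Qed.

Lemma TM_cvg k : (0 < k)%N ->
  TM M k @[M --> \oo] --> fine (P (atleast A k)).
Proof.
move=> k0.
have mG M : measurable (G k M) by exact: (mdet (fun s : {set 'I_M} => (k <= #|s|)%N)).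
have mU : measurable (\bigcup_M G k M) by exact: bigcupT_measurable.
have ndG : nondecreasing_seq (G k).
  by move=> M N MN; apply/subsetPset => w /=; move/leq_trans; apply; exact: cnt_mono.
have := @nondecreasing_cvg_mu _ _ R P (G k) mG mU ndG.
rewrite G_union // => H.
have fin : P (atleast A k) \is a fin_num by rewrite -G_union //; exact: finP.
have H2 : (P \o G k) @ \oo --> (fine (P (atleast A k)))%:E by rewrite (fineK fin).
exact: (fine_cvg H2).
Qed.

Definition KM M l : set {fset nat} :=
  [set I | ksubsets l I /\ forall x, x \in I -> (x <= M)%N].

Lemma esum_sub (X Y : set {fset nat}) (a : {fset nat} -> \bar R) :
  X `<=` Y -> (esum X a <= esum Y a)%E.
Proof.
move=> XY; apply: ereal_sup_le => _ [F [fF FX] <-]; exists F => //.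
by split => //; apply: subset_trans XY.
Qed.

Lemma minter M (t : {set 'I_M}) : measurable (inter_of A (emb t)).
Proof. by rewrite inter_emb; exact: (mdet (fun s : {set 'I_M} => t \subset s)). Qed.

Lemma esum_KM M l :
  esum (KM M l) (fun I => P (inter_of A I)) = (SM M l)%:E.
Proof.
rewrite (@reindex_esum _ _ _ [set t : {set 'I_M} | #|t| == l] _ (@emb M)); last first.
  split.
  - move=> t /= /eqP tl; split; first split.
    + by rewrite emb_card.
    + by move=> i /emb_pos.
    + by move=> x /emb_bound.
  - by move=> s t _ _; exact: emb_inj.
  - move=> I [[Il Ipos] IM].
    have HI : forall x, x \in I -> (0 < x <= M)%N by move=> x xI; rewrite Ipos ?IM.
    exists [set i : 'I_M | i.+1 \in I]%SET; last exact: emb_surj.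
    by rewrite /= -(emb_card [set i : 'I_M | i.+1 \in I]%SET) emb_surj // Il.
rewrite esum_fset; last 2 first.
- exact: finite_finset.
- by move=> t _; exact: measure_ge0.
rewrite fsum_finType /SM -sumEFin; apply: eq_bigr => t _.
by rewrite fineK //; apply: finP; exact: minter.
Qed.

Lemma fin_bound (X : set {fset nat}) : finite_set X ->
  exists M, forall I, X I -> forall x, x \in I -> (x <= M)%N.
Proof.
move=> fX; exists (\max_(I <- fset_set X) \max_(x <- enum_fset I) x)%N.
move=> I XI x xI.
apply: (leq_trans (@leq_bigmax_seq nat (enum_fset I) xpredT id x xI isT)).
have II : I \in fset_set X by rewrite in_fset_set // mem_set.
exact: (@leq_bigmax_seq _ (enum_fset (fset_set X)) xpredT
  (fun I : {fset nat} => \max_(x <- enum_fset I) x)%N I II isT).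
Qed.

Lemma SM_cvg l : Ssum P A l \is a fin_num ->
  SM M l @[M --> \oo] --> fine (Ssum P A l).
Proof.
move=> finS.
set a := fun I => P (inter_of A I).
set E := fun M => esum (KM M l) a.
have ndE : nondecreasing_seq E.
  move=> M N MN; apply: esum_sub => I [Il IM]; split => // x xI.
  exact: leq_trans (IM x xI) MN.
have supE : ereal_sup (range E) = Ssum P A l.
  apply/eqP; rewrite eq_le; apply/andP; split.
    apply: ge_ereal_sup => _ [M _ <-]; apply: esum_sub => I [] //.
  apply: ge_ereal_sup => _ [X [fX Xk] <-].
  have [M HM] := fin_bound fX.
  apply: (@le_trans _ _ (E M)); last by apply: ereal_sup_ubound; exists M.
  apply: esum_ge; exists X => //; split => // I XI; split; first exact: Xk.
  exact: HM.
have H := ereal_nondecreasing_cvgn ndE.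
rewrite supE -(fineK finS) in H.
have H2 : (fun M => (SM M l)%:E) @ \oo --> (fine (Ssum P A l))%:E.
  by apply: cvg_trans H; apply: near_eq_cvg; near=> M; rewrite /E esum_KM.
exact: (fine_cvg H2).
Unshelve. all: by end_near.
Qed.

Definition fk k := fun j : nat => (-1) ^+ j * ('C(j + k - 1, k - 1))%:R
                          * fine (Ssum P A (j + k)).
Definition Tk k := fine (P (atleast A k)).
Definition err k J := (-1) ^+ J.+1 * (Tk k - series (fk k) J.+1).

Hypothesis Sfin : forall l, (0 < l)%N -> Ssum P A l \is a fin_num.

Lemma uM_cvg k J : (0 < k)%N ->
  uM M k J @[M --> \oo] --> series (fk k) J.+1.
Proof.
move=> k0; rewrite /series /= big_mkord /uM.
elim: J => [|J IH].
  rewrite big_ord1.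
  under eq_cvg do rewrite big_ord1.
  apply: cvgM; first exact: cvg_cst.
  by apply: SM_cvg; apply: Sfin.
rewrite big_ord_recr /=.
under eq_cvg do rewrite big_ord_recr /=.
apply: cvgD; first exact: IH.
apply: cvgM; first exact: cvg_cst.
by apply: SM_cvg; apply: Sfin; rewrite addn_gt0 k0 orbT.
Qed.

Lemma errM_cvg k J : (0 < k)%N -> errM M k J @[M --> \oo] --> err k J.
Proof.
move=> k0; rewrite /errM /err.
apply: cvgM; first exact: cvg_cst.
apply: cvgB; first exact: TM_cvg.
exact: uM_cvg.
Qed.

Lemma err_ge0 k J : (0 < k)%N -> 0 <= err k J.
Proof.
move=> k0; apply: (cvgr_to_ge (@errM_cvg k J k0)).
by apply: nearW => M; exact: errM_ge0.
Qed.

Lemma err_step k J : (0 < k)%N -> (k <= J.+1)%N -> err k J.+1 <= err k.+1 J.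
Proof.
move=> k0 kJ; rewrite -subr_ge0.
apply: (cvgr_to_ge (cvgB (@errM_cvg k.+1 J (ltn0Sn k)) (@errM_cvg k J.+1 k0))).
by apply: nearW => M /=; rewrite subr_ge0; exact: errM_step.
Qed.

Lemma norm_err k J : `|err k J| = `|Tk k - series (fk k) J.+1|.
Proof. by rewrite /err normrM normrX normrN1 expr1n mul1r. Qed.

Lemma id_step k : (0 < k)%N -> identity_holds P A k.+1 -> identity_holds P A k.
Proof.
move=> k0; rewrite /identity_holds => H.
apply/cvgrPdist_le => e e0.
move/cvgrPdist_le: H => /(_ e e0) [N _ HN].
exists (maxn N k).+2 => // n /= Hn.
have -> : n = (n.-2).+2 by lia.
set J := n.-2.
have kJ : (k <= J.+1)%N by rewrite /J; lia.
have := err_step k0 kJ.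
rewrite -(ger0_norm (@err_ge0 k J.+1 k0)) -(ger0_norm (@err_ge0 k.+1 J (ltn0Sn k))).
rewrite !norm_err => /le_trans; apply.
apply: HN; rewrite /J /=; lia.
Qed.
End Meas.


Unset Implicit Arguments.

Theorem corollary2p2 (d : measure_display) (T : measurableType d)
  (R : realType) (P : probability T R) (A : nat -> set T)
  (mA : forall i, measurable (A i))
  (Sfin : forall l, (0 < l)%N -> Ssum P A l \is a fin_num)
  (m : nat) (hm : (1 < m)%N) (hid : identity_holds P A m) :
  forall k, (1 <= k <= m - 1)%N -> identity_holds P A k.
Proof.
have key : forall i, (i <= m - 1)%N -> identity_holds P A (m - i).
  elim => [|i IH] Hi; first by rewrite subn0.
  have e : (m - i = (m - i.+1).+1)%N by lia.
  apply: (id_step mA Sfin); first lia.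
  rewrite -e; apply: IH; lia.
move=> k /andP[k1 km].
have -> : k = (m - (m - k))%N by lia.
apply: key; lia.
Qed.
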